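(* Let $G$ be a sufficiently large abelian group of order $n$ with $G\not\cong\mathbb{Z}_2^m$ and $G\not\cong\mathbb{Z}_2^m\times\mathbb{Z}_4$ (for any $m$). Then there are $n/100$ pairwise disjoint triples $\{x,y,z\}$ of distinct non-involutions of $G$ with $x+y+z=0$.
   Context: A non-involution is an element $x\in G$ with $x\neq -x$ (i.e. $2x\neq 0$). ''Sufficiently large'' means there is $n_0$ such that the statement holds for all such groups of order at least $n_0$. *)

(* Defs.v *)
From HB Require Import structures.
From mathcomp Require Import all_boot all_order all_algebra.
Set Implicit Arguments. Unset Strict Implicit. Unset Printing Implicit Defensive.
Import GRing.Theory.
Local Open Scope ring_scope.

Definition zmod_iso (G H : zmodType) : Prop :=
  exists f : G -> H, bijective f /\ {morph f : x y / x + y}.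

Definition non_involution (G : zmodType) (x : G) : bool := x + x != 0.

Definition Z2pow (m : nat) : zmodType := 'rV['Z_2]_m.
Definition Z2powZ4 (m : nat) : zmodType := ('rV['Z_2]_m * 'Z_4)%type.

Definition triple_elems (G : Type) (T : seq (G * G * G)) : seq G :=
  flatten [seq [:: t.1.1; t.1.2; t.2] | t <- T].

Definition zero_sum_triple_family (G : finZmodType) (T : seq (G * G * G)) : Prop :=
  uniq (triple_elems T) /\
  all (fun t : G * G * G =>
         [&& non_involution t.1.1, non_involution t.1.2, non_involution t.2
           & t.1.1 + t.1.2 + t.2 == 0]) T.

(* Main.v *)
Require Import Defs.
From HB Require Import structures.
From mathcomp Require Import all_boot all_order all_algebra all_fingroup all_solvable.
From mathcomp Require Import zify.
Set Implicit Arguments. Unset Strict Implicit. Unset Printing Implicit Defensive.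
Import GRing.Theory FinRing.Theory.
Local Open Scope ring_scope.

Lemma Z2_add_self (x : 'Z_2) : x + x = 0.
Proof. by apply/val_inj; case: x => [[|[|k]] ?]. Qed.

Lemma rV2_abelem m : (2.-abelem [set: 'rV['Z_2]_m])%g.
Proof.
apply: exponent2_abelem; apply/exponentP => v _.
rewrite zmodXgE; apply/rowP => i; rewrite !mxE.
exact: Z2_add_self.
Qed.

Lemma abelem_rV (G : finZmodType) (K : {group G}) : (2.-abelem K)%g ->
  exists m (psi : 'rV['Z_2]_m -> G), injective psi /\ {morph psi : x y / x + y}
    /\ (forall v, psi v \in K) /\ #|K| = (2^m)%N.
Proof.
move=> abK.
set m := logn 2 #|K|.
have cK : #|K| = (2 ^ m)%N by rewrite /m -card_pgroup // (abelem_pgroup abK).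
have : ([set: 'rV['Z_2]_m] \isog K)%g.
  rewrite (isog_abelem_card _ (rV2_abelem m)) abK /= cardsT card_mx card_ord.
  by rewrite mul1n cK.
case/isogP=> f /injmP injf fim.
exists m, f; split; first by move=> x y e; apply: injf; rewrite ?inE.
split; first by move=> x y; rewrite -zmodMgE morphM ?inE.
split=> //; move=> v; rewrite -fim; apply: mem_morphim; rewrite inE.
  by []. by [].
Qed.

Lemma inv_iso (A B : zmodType) (f : A -> B) :
  bijective f -> {morph f : x y / x + y} -> zmod_iso B A.
Proof.
case=> g gf fg fM; exists g; split; first by exists f.
move=> x y; apply: (can_inj gf); by rewrite fM !fg.
Qed.

Lemma case1 (G : finZmodType) : (forall x : G, x + x = 0) ->
  exists m, zmod_iso G (Z2pow m).
Proof.
move=> h2.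
have ab : (2.-abelem [set: G])%g.
  by apply: exponent2_abelem; apply/exponentP => x _; rewrite zmodXgE mulr2n h2.
have [m [psi [ipsi [mpsi [_ cK]]]]] := @abelem_rV _ [group of [set: G]] ab.
exists m; apply: (@inv_iso _ _ psi) => //.
apply: inj_card_bij => //.
by rewrite card_mx card_ord mul1n -cK cardsT.
Qed.

Lemma case2 (G : finZmodType) (g : G) : g + g != 0 ->
  (forall x : G, x + x = 0 \/ x + x = g + g) ->
  exists m, zmod_iso G (Z2powZ4 m).
Proof.
move=> gn0 hD.
set c := g + g.
have cc : c + c = 0.
  case: (hD c) => // e.
  have c0 : c = 0 by apply/(addrI c); rewrite addr0; exact: e.
  by move: gn0; rewrite -/c c0 eqxx.
have g4 : (g ^+ 4 = 1)%g by rewrite zmodXgE -[4%N]/(2+2)%N mulrnDr mulr2n.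
have og : #[g]%g = 4%N.
  have d4 : (#[g]%g %| 4)%N by rewrite order_dvdn g4.
  have n2 : ~~ (#[g]%g %| 2)%N by rewrite order_dvdn zmodXgE mulr2n.
  have : (#[g]%g <= 4)%N by apply: dvdn_leq.
  move: d4 n2; case: #[g]%g => [|[|[|[|[|k]]]]] //.
have eG : exponent [set: G] = 4%N.
  apply/eqP; rewrite eqn_dvd; apply/andP; split.
    apply/exponentP => x _; rewrite zmodXgE -[4%N]/(2+2)%N mulrnDr mulr2n.
    by case: (hD x) => ->; rewrite ?addr0.
  by rewrite -og dvdn_exponent ?inE.
have /splitsP [K /complP [tiK mulK]] :=
  abelian_splits (in_setT g) (etrans og (esym eG)) (zmod_abelian _).
have abK : (2.-abelem K)%g.
  apply: exponent2_abelem; apply/exponentP => k kK; rewrite zmodXgE mulr2n.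
  case: (hD k) => // e; exfalso.
  have : c \in (<[g]> :&: K)%g.
    rewrite inE; apply/andP; split; first by rewrite /c -mulr2n -zmodXgE mem_cycle.
    by rewrite /c -e -zmodMgE groupM.
  by rewrite tiK inE; apply/negP.
have [m [psi [ipsi [mpsi [inK cK]]]]] := @abelem_rV _ K abK.
exists m.
pose phi (p : 'rV['Z_2]_m * 'Z_4) : G := psi p.1 + g *+ (p.2 : nat).
have psi0 : psi 0 = 0 by apply/(addrI (psi 0)); rewrite -mpsi !addr0.
have phiM : {morph phi : x y / x + y}.
  move=> [v a] [w b]; rewrite /phi /= mpsi.
  have ex i : g *+ (i %% 4) = g *+ i by rewrite -!zmodXgE -og expg_mod_order.
  by rewrite ex mulrnDr addrACA.
apply: (@inv_iso _ _ phi) => //.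
apply: inj_card_bij.
  move=> [v a] [w b]; rewrite /phi /= => e.
  have e2 : psi (v - w) = g *+ b - g *+ a.
    apply/(addIr (psi w)); rewrite -mpsi subrK; apply/(addIr (g *+ a)).
    by rewrite e [RHS]addrAC subrK addrC.
  have : psi (v - w) \in (<[g]> :&: K)%g.
    rewrite inE inK andbT e2.
    by rewrite -!zmodXgE -zmodVgE -zmodMgE groupM ?groupV ?mem_cycle.
  rewrite tiK inE => /eqP e3.
  have vw : v = w by apply/eqP; rewrite -subr_eq0; apply/eqP/ipsi; rewrite e3 psi0.
  move: e; rewrite vw => /addrI /eqP; rewrite -!zmodXgE eq_expg_mod_order og.
  rewrite !modn_small ?ltn_ord // => /eqP ab.
  by congr (_, _); apply/val_inj.
rewrite card_prod card_mx card_ord card_ord mul1n -cK -cardsT -mulK.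
by rewrite TI_cardMg // mulnC -og.
Qed.

Section Count.
Variable G : finZmodType.
Definition HH : {set G} := [set x : G | x + x == 0].
Definition DD : {set G} := [set x + x | x : G].

Lemma HD_card : (#|HH| * #|DD| <= #|G|)%N.
Proof.
pose s (d : G) : G := odflt 0 [pick y | y + y == d].
have sP d : d \in DD -> s d + s d = d.
  rewrite /s; case: pickP => [y /eqP //|none] /imsetP [x _ dx].
  by have := none x; rewrite /= -dx eqxx.
pose m (p : G * G) := s p.1 + p.2.
have inj : {in setX DD HH &, injective m}.
  move=> [d h] [d' h'] /setXP [dD hH] /setXP [dD' hH'] /= e.
  have dd : d = d'.
    move: (congr1 (fun u => u + u) e); rewrite /m /=.
    rewrite addrACA sP // addrACA sP //.
    by move: hH hH'; rewrite !inE => /eqP -> /eqP ->; rewrite !addr0.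
  by move: e; rewrite /m /= dd => /addrI ->.
rewrite mulnC -cardsX -(card_in_imset inj); exact: max_card.
Qed.

Lemma fiber_card (t : G) : (#|[set y : G | (y + y)%R == t]| <= #|HH|)%N.
Proof.
have [/eqP ->|/set0Pn [y0]] := boolP ([set y : G | y + y == t] == set0).
  by rewrite cards0.
rewrite inE => /eqP y0t.
rewrite -(card_imset _ (addIr (- y0))).
apply: subset_leq_card; apply/subsetP => u /imsetP [y]; rewrite !inE => /eqP yt ->.
by rewrite addrACA yt -opprD y0t subrr.
Qed.

Lemma nonH (a : G) : (- a) + (- a) = 0 -> a + a = 0.
Proof. by move=> e; apply/eqP; rewrite -oppr_eq0 opprD e. Qed.

Lemma step (U : {set G}) : (3 * #|HH| <= #|G|)%N -> (3 <= #|DD|)%N ->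
  (8 * #|U| + 8 < #|G|)%N ->
  exists x y : G, [&& x + x != 0, y + y != 0, (- (x + y)) + (- (x + y)) != 0,
     x \notin U, y \notin U, - (x + y) \notin U, x != y, y != - (x + y)
     & x != - (x + y)].
Proof.
move=> h3 d3 hU.
have hd := HD_card.
pose A := (4 <= #|DD|)%N.
pose E : {set G} := if A then set0 else DD.
have cE : (#|E| <= 3)%N.
  rewrite /E; case: ifP => hA; first by rewrite cards0.
  by move: hA; rewrite /A; lia.
have [x xn] : exists x, x \in ~: (HH :|: U :|: E).
  apply/card_gt0P; have := cardsC (HH :|: U :|: E).
  have c1 := (leq_card_setU (HH :|: U) E).1; have c2 := (leq_card_setU HH U).1.
  move=> e; have {}e : (#|HH :|: U :|: E| + #|~: (HH :|: U :|: E)|)%N = #|G| := e.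
  lia.
move: xn; rewrite !inE !negb_or => /andP [/andP [xH xU] xE].
pose F : {set G} := if A then [set y : G | y + y == - x] else set0.
have cF : (#|F| <= if A then #|HH| else 0)%N.
  rewrite /F; case: ifP => _; [exact: fiber_card | by rewrite cards0].
pose P1 := (fun y => x + y) @^-1: HH.
pose P2 := (fun y => - (x + y)) @^-1: U.
pose S := [set x; - (x + x)].
pose B := HH :|: P1 :|: F :|: U :|: P2 :|: S.
have cB : (#|B| < #|G|)%N.
  have c1 : #|P1| = #|HH| by apply: card_preimset; exact: addrI.
  have c2 : #|P2| = #|U|.
    by apply: card_preimset => a b /oppr_inj /addrI.
  have c3 : (#|S| <= 2)%N.
    by rewrite cardsU !cards1; lia.
  have key : (#|HH| + #|HH| + #|F| + #|U| + #|U| + 2 < #|G|)%N.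
    move: cF; rewrite /A; case: ifP => hA cF.
      have : (#|HH| * 4 <= #|G|)%N by apply: leq_trans hd; rewrite leq_mul2l hA orbT.
      lia.
    lia.
  have k1 := (leq_card_setU (HH :|: P1 :|: F :|: U :|: P2) S).1.
  have k2 := (leq_card_setU (HH :|: P1 :|: F :|: U) P2).1.
  have k3 := (leq_card_setU (HH :|: P1 :|: F) U).1.
  have k4 := (leq_card_setU (HH :|: P1) F).1.
  have k5 := (leq_card_setU HH P1).1.
  apply: leq_ltn_trans key; rewrite /B -{2}c1 -{2}c2.
  apply: (leq_trans k1); apply: leq_add c3.
  apply: (leq_trans k2); apply: leq_add (leqnn _).
  apply: (leq_trans k3); apply: leq_add (leqnn _).
  apply: (leq_trans k4); apply: leq_add (leqnn _).
  exact: k5.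
have [y yn] : exists y, y \in ~: B.
  apply/card_gt0P; have := cardsC B.
  move=> e; have {}e : (#|B| + #|~: B|)%N = #|G| := e.
  lia.
move: yn; rewrite /B /S /P1 /P2 !inE !negb_or => /andP [/andP [/andP [/andP [/andP [yH yP1] yF] yU] yP2] /andP [yx yxx]].
exists x, y.
have zz : (- (x + y)) + (- (x + y)) != 0.
  by apply/negP => /eqP /nonH /eqP; apply/negP.
rewrite xH yH zz xU yU yP2 /= eq_sym yx /=.
have -> : (x != - (x + y)).
  apply/negP => /eqP e; move/negP: yxx; apply.
  have h : x + (x + y) == 0 by rewrite addr_eq0; apply/eqP.
  by rewrite -addr_eq0 addrC -addrA.
rewrite andbT.
apply/negP => /eqP e.
have h : y + (x + y) == 0 by rewrite addr_eq0; apply/eqP.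
case hA : A.
  move: yF; rewrite /F hA inE => /negP; apply.
  by rewrite -addr_eq0 -addrA (addrC y x).
move: xE; rewrite /E hA => /negP; apply; apply/imsetP; exists (x + y) => //.
by rewrite -addrA (eqP h) addr0.
Qed.

Lemma size_te (T : seq (G * G * G)) : size (triple_elems T) = (3 * size T)%N.
Proof.
elim: T => [|t T IH] //; rewrite /triple_elems /= -/(triple_elems T) IH.
by rewrite mulnS.
Qed.

Lemma build : (3 * #|HH| <= #|G|)%N -> (3 <= #|DD|)%N ->
  forall k, (24 * k + 8 < #|G| + 24)%N ->
  exists T : seq (G * G * G), zero_sum_triple_family T /\ size T = k.
Proof.
move=> h3 d3; elim=> [|k IH] hk.
  by exists [::]; split.
have [T [[uT aT] sT]] := IH (ltac:(lia)).
pose U := [set z | z \in triple_elems T].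
have cU : (#|U| <= 3 * k)%N.
  by rewrite cardsE -sT -size_te card_size.
have [x [y]] := @step U h3 d3 (ltac:(lia)).
move=> /andP [xH /andP [yH /andP [zH /andP [xU /andP [yU /andP [zU /andP [xy /andP [yz xz]]]]]]]].
move: xU yU zU; rewrite !inE => xU yU zU.
exists ((x, y, - (x + y)) :: T); split; last by rewrite /= sT.
split.
  rewrite /triple_elems /= -/(triple_elems T) uT !inE !negb_or.
  by rewrite xy xz yz xU yU zU.
by rewrite /= aT /non_involution xH yH zH subrr eqxx.
Qed.

End Count.

Theorem lemma6p32 :
  exists n0 : nat, forall G : finZmodType,
    (n0 <= #|G|)%N ->
    (forall m : nat, ~ zmod_iso G (Z2pow m)) ->
    (forall m : nat, ~ zmod_iso G (Z2powZ4 m)) ->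
    exists T : seq (G * G * G),
      zero_sum_triple_family T /\ (#|G| <= 100 * size T)%N.
Proof.
exists 100%N => G hn h1 h2.
have h0 : (0 : G) \in DD G by apply/imsetP; exists 0; rewrite ?addr0.
have inD (x : G) : x + x \in DD G by apply/imsetP; exists x.
have d3 : (3 <= #|DD G|)%N.
  rewrite leqNgt; apply/negP => hlt.
  case: (leqP #|DD G| 1) => [d1 | d2].
    have all0 (x : G) : x + x = 0.
      by apply/eqP; rewrite -[_ == _]/(_ \in pred1 0) -(card_le1P d1 _ h0) inD.
    by have [m] := case1 all0; apply: h1.
  have := cardsD1 (0 : G) (DD G); rewrite h0 add1n => e; rewrite e in hlt d2.
  have nn (q : nat) : (q.+1 < 3)%N -> (1 < q.+1)%N -> q = 1%N by lia.
  have c1 := nn _ hlt d2.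
  have [d dE] := cards1P (introT eqP c1).
  have : d \in DD G :\ 0 by rewrite dE set11.
  rewrite !inE => /andP [dn0 /imsetP [g _ dg]].
  have hD (x : G) : x + x = 0 \/ x + x = g + g.
    case: (eqVneq (x + x) 0) => [-> | xn]; first by left.
    right; have : x + x \in DD G :\ 0 by rewrite !inE xn inD.
    by rewrite dE inE -dg => /eqP.
  have gn : g + g != 0 by rewrite -dg.
  have [m] := @case2 G g gn hD.
  by apply: h2.
have h3 : (3 * #|HH G| <= #|G|)%N.
  apply: leq_trans (HD_card G); by rewrite mulnC leq_mul2l d3 orbT.
have [T [fT sT]] := @build G h3 d3 ((#|G| + 99) %/ 100) (ltac:(lia)).
exists T; split => //; rewrite sT; lia.
Qed.
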